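(* Let $(\tau_\Sigma,\mathbb{B}_\Sigma)_\Sigma$ be a family indexed by finite sets $\Sigma$ with at least two elements, where $\tau_\Sigma$ is a topology on $T_\Sigma^\omega$ and $\mathbb{B}_\Sigma$ a basis of $\tau_\Sigma$, satisfying: (P1) $\mathbb{B}_\Sigma$ contains every basic clopen set $N_t$, $t$ a finite $\Sigma$-labelled binary tree; (P2) $\mathbb{B}_\Sigma$ is closed under finite unions and intersections; (P3) if $\Gamma$ is a finite set with at least two elements and $L\in\mathbb{B}_{\Sigma\times\Gamma}$ then $\pi_0[L]\in\mathbb{B}_\Sigma$; (P4) for each $L\in\mathbb{B}_\Sigma$ there is $C\in\mathbb{B}_{\Sigma\times 2}$ with $C\subseteq T_\Sigma^\omega\times\mathbb{T}_\infty$, $C$ the intersection of a closed subset of $T_\Sigma^\omega\times T_2^\omega$ with $T_\Sigma^\omega\times\mathbb{T}_\infty$, and $L=\pi_0[C]$. Then every $\tau_\Sigma$ is strong Choquet.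
   Context: $T_\Sigma^\omega$ is the set of functions $t:\{l,r\}^*\to\Sigma$ (infinite binary $\Sigma$-labelled trees) with the Cantor topology given by the distance $2^{-n}$, $n$ the least length of a node where two trees differ. A finite tree is a map $s:S\to\Sigma$ with $S\subseteq\{l,r\}^*$ finite and prefix-closed; $N_s$ is the set of $t\in T_\Sigma^\omega$ extending $s$. $T_{\Sigma\times\Gamma}^\omega$ is identified with $T_\Sigma^\omega\times T_\Gamma^\omega$ nodewise and $\pi_0$ is the first projection. A path of $t$ is the sequence of labels $t(u_0)t(u_1)\cdots$ along an infinite branch $u_0\sqsubset u_1\sqsubset\cdots$ with $u_0$ the root and each $u_{i+1}$ a child of $u_i$. $2=\{0,1\}$ and $\mathbb{T}_\infty$ is the set of $t\in T_2^\omega$ such that every path of $t$ contains infinitely many $1$'s. Strong Choquet: nonempty and Player 2 has a winning strategy in the strong Choquet game (Player 1 plays open $U_i\ni x_i$ with $U_i\subseteq V_{i-1}$, Player 2 plays open $V_i$ with $x_i\in V_i\subseteq U_i$, Player 2 wins if $\bigcap_iV_i\neq\emptyset$). *)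

(* Defs.v *)
From mathcomp Require Import all_boot.
Set Implicit Arguments. Unset Strict Implicit. Unset Printing Implicit Defensive.

(* Nodes of the full binary tree: words over {l,r}, l = false, r = true.
   A child of u is rcons u d. *)
Definition node := seq bool.

Definition tree (S : Type) := node -> S.

Definition subsetP {X : Type} (A B : X -> Prop) := forall x, A x -> B x.

Definition is_topology {X : Type} (T : (X -> Prop) -> Prop) : Prop :=
  [/\ T (fun _ => True), T (fun _ => False),
      (forall F : (X -> Prop) -> Prop, (forall U, F U -> T U) ->
          T (fun x => exists U, F U /\ U x)) &
      (forall U V, T U -> T V -> T (fun x => U x /\ V x))].

Definition is_basis {X : Type} (T B : (X -> Prop) -> Prop) : Prop :=
  (forall b, B b -> T b) /\
  (forall U x, T U -> U x -> exists b, [/\ B b, b x & subsetP b U]).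

(* Finite trees: a finite prefix-closed set of nodes (given as a list)
   together with a labelling; N_s = trees extending s. *)
Definition prefix_closed (D : seq node) : Prop :=
  forall u v, u \in D -> prefix v u -> v \in D.

Definition basic_clopen (S : Type) (D : seq node) (s : node -> S) : tree S -> Prop :=
  fun t => forall u, u \in D -> t u = s u.

Definition proj0_img (S G : Type) (L : tree (S * G) -> Prop) : tree S -> Prop :=
  fun t => exists t', L t' /\ forall u, (t' u).1 = t u.

(* Open / closed sets of the Cantor topology (d = 2^{-n}, n least length of
   a node where two trees differ). *)
Definition cantor_open (S : Type) (U : tree S -> Prop) : Prop :=
  forall x, U x -> exists n : nat,
    forall y, (forall u : node, (size u < n)%N -> y u = x u) -> U y.
Definition cantor_closed (S : Type) (F : tree S -> Prop) : Prop :=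
  cantor_open (fun x => ~ F x).

Definition is_branch (b : nat -> node) : Prop :=
  b 0 = [::] /\ forall i, exists d : bool, b i.+1 = rcons (b i) d.

Definition T_inf (t : tree bool) : Prop :=
  forall b, is_branch b -> forall N, exists i, (N <= i)%N /\ t (b i) = true.

(* Strong Choquet game.  A strategy of Player 2 maps the list of Player 1's
   moves (x_0,U_0),...,(x_i,U_i) to V_i. *)
Definition strategy (X : Type) := seq (X * (X -> Prop)) -> (X -> Prop).

Definition V_of (X : Type) (sg : strategy X) (p : nat -> X * (X -> Prop)) (i : nat)
  : X -> Prop := sg (mkseq p i.+1).

Definition legal_upto (X : Type) (T : (X -> Prop) -> Prop) (sg : strategy X)
  (p : nat -> X * (X -> Prop)) (n : nat) : Prop :=
  forall i, (i <= n)%N ->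
    [/\ T (p i).2, (p i).2 (p i).1 &
        (0 < i)%N -> subsetP (p i).2 (V_of sg p i.-1)].

Definition winning_strategy (X : Type) (T : (X -> Prop) -> Prop) (sg : strategy X) : Prop :=
  (forall p n, legal_upto T sg p n ->
     [/\ T (V_of sg p n), V_of sg p n (p n).1 & subsetP (V_of sg p n) (p n).2]) /\
  (forall p, (forall n, legal_upto T sg p n) ->
     exists y, forall n, V_of sg p n y).

Definition strong_choquet (X : Type) (T : (X -> Prop) -> Prop) : Prop :=
  (exists x : X, True) /\ exists sg : strategy X, winning_strategy T sg.

(* Main.v *)
Require Import Defs.
From mathcomp Require Import all_boot.
From Stdlib Require Import Classical ClassicalEpsilon FunctionalExtensionality PropExtensionality.
From mathcomp Require Import zify.
Set Implicit Arguments. Unset Strict Implicit. Unset Printing Implicit Defensive.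

Lemma predext (X:Type) (P Q : X -> Prop) : (forall x, P x <-> Q x) -> P = Q.
Proof. move=> H; apply: functional_extensionality => x; apply: propositional_extensionality; exact: H. Qed.

Definition lev (i : nat) : seq node := [seq tval t | t <- enum {: i.-tuple bool}].

Lemma mem_lev i u : (u \in lev i) = (size u == i).
Proof.
apply/mapP/eqP => [[t _ ->]|Hs]; first exact: size_tuple.
have Hu : size u == i by apply/eqP.
by exists (Tuple Hu); rewrite ?mem_enum.
Qed.

Definition upto d : seq node := flatten [seq lev i | i <- iota 0 d.+1].

Lemma mem_upto d u : (u \in upto d) = (size u <= d).
Proof.
apply/flattenP/idP => [[s /mapP[i]]|H].
  by rewrite mem_iota => /andP[_ Hi] -> ; rewrite mem_lev => /eqP ->; lia.
exists (lev (size u)); last by rewrite mem_lev.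
by apply/mapP; exists (size u) => //; rewrite mem_iota; lia.
Qed.

Lemma upto_pc d : prefix_closed (upto d).
Proof.
move=> u v; rewrite !mem_upto => H /size_prefix; lia.
Qed.

Definition goodK (f : node -> bool) N d :=
  forall u : node, size u = d -> exists i, N <= i <= d /\ f (take i u) = true.

Lemma konig f N : T_inf f -> exists d, N <= d /\ goodK f N d.
Proof.
move=> Hf; apply: NNPP => Hn.
have H : forall d, N <= d -> exists u, size u = d /\
    forall i, N <= i <= d -> f (take i u) = false.
  move=> d Hd; apply: NNPP => Hu; apply: Hn; exists d; split=>// u Hs.
  apply: NNPP => Hi; apply: Hu; exists u; split=>// i Hi'.
  apply/negbTE/negP => Hft; apply: Hi; exists i; split=>//.
pose ok := fun u : node => forall i, N <= i <= size u -> f (take i u) = false.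
pose ext := fun u : node => forall d, size u <= d ->
   exists v, [/\ size v = d, ok v & take (size u) v = u].
have ok_take v j : ok v -> ok (take j v).
  move=> Hv i Hi; move: Hi; rewrite size_take => Hi.
  rewrite take_takel; last by case: ifP Hi => h ? ; lia.
  apply: Hv; case: ifP Hi => h ? ; lia.
have ext0 : ext [::].
  move=> d _; case: (leqP N d) => Hd.
  - case: (H d Hd) => u [Hs Hu]; exists u; split=>//; last by rewrite take0.
    by move=> i; rewrite Hs; exact: Hu.
  - exists (nseq d false); split; [by rewrite size_nseq| |by rewrite take0].
    by move=> i; rewrite size_nseq => Hi; exfalso; lia.
have ext_step u : ext u -> ext (rcons u false) \/ ext (rcons u true).
  move=> Hu; apply: NNPP => Hno.
  have [H1 H2] := not_or_and _ _ Hno.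
  have [d1 Hd1v] := not_all_ex_not _ _ H1.
  have [Hd1 Hv1] := imply_to_and _ _ Hd1v.
  have [d2 Hd2v] := not_all_ex_not _ _ H2.
  have [Hd2 Hv2] := imply_to_and _ _ Hd2v.
  rewrite size_rcons in Hd1; rewrite size_rcons in Hd2.
  case: (Hu (maxn d1 d2)) => [|v [Hs Hok Ht]]; first lia.
  have Hvb : take (size u).+1 v = rcons u (nth false v (size u)).
    by rewrite (take_nth false) ?Ht //; lia.
  move: Hvb; case: (nth false v (size u)) => Hvb.
  + apply: Hv2; exists (take d2 v); split.
    * by rewrite size_takel //; lia.
    * exact: ok_take.
    * by rewrite size_rcons take_takel ?Hvb // ; lia.
  + apply: Hv1; exists (take d1 v); split.
    * by rewrite size_takel //; lia.
    * exact: ok_take.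
    * by rewrite size_rcons take_takel ?Hvb // ; lia.
have ext_ok u : ext u -> ok u.
  move=> Hu; case: (Hu (size u) (leqnn _)) => v [Hs Hok Ht].
  by move: Ht; rewrite -Hs take_size => <-.
pose next := fun u : node => if excluded_middle_informative (ext (rcons u false))
   then rcons u false else rcons u true.
pose b := fun i => iter i next [::].
have Hext i : ext (b i).
  elim: i => [|i IH] //=; rewrite /next.
  case: excluded_middle_informative => // h; by case: (ext_step _ IH).
have Hsz i : size (b i) = i.
  elim: i => [|i IH] //=; rewrite /next.
  by case: excluded_middle_informative => ?; rewrite size_rcons -/(b i) IH.
have Hbr : is_branch b.
  split=> // i; rewrite /b /= /next.
  by case: excluded_middle_informative => ?; [exists false|exists true].
case: (Hf b Hbr N) => i [Hi Hfi].
have Hok := ext_ok _ (Hext i) i.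
have Ht : take i (b i) = b i by rewrite -{1}(Hsz i) take_size.
rewrite Ht Hsz Hfi in Hok.
have : false = true by apply/esym/Hok; lia.
by [].
Qed.

Definition dep (S : finType) (w : tree (S*bool)) (N : nat) : nat :=
  maxn N (epsilon (inhabits 0) (fun d => N <= d /\ goodK (fun u => (w u).2) N d)).

Lemma dep_ge (S : finType) (w : tree (S*bool)) N : N <= dep w N.
Proof. exact: leq_maxl. Qed.

Lemma dep_good (S : finType) (w : tree (S*bool)) N :
  T_inf (fun u => (w u).2) -> goodK (fun u => (w u).2) N (dep w N).
Proof.
move=> H; have [d Hd] := konig N H.
have [h1 h2] := epsilon_spec (inhabits 0) (fun d => N <= d /\ goodK (fun u => (w u).2) N d) (ex_intro _ d Hd).
by rewrite /dep (maxn_idPr h1).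
Qed.

Definition wit (S : finType) (w0 : tree (S*bool)) (b : tree (S*bool) -> Prop) (x : tree S) :=
  epsilon (inhabits w0) (fun w => b w /\ forall u, (w u).1 = x u).

Lemma wit_spec (S : finType) (w0 : tree (S*bool)) b x :
  proj0_img b x -> b (wit w0 b x) /\ forall u, ((wit w0 b x) u).1 = x u.
Proof. move=> [w Hw]; exact: (epsilon_spec (inhabits w0) (fun w => b w /\ forall u, (w u).1 = x u) (ex_intro _ w Hw)). Qed.

Definition refine (S : finType) (Ck : tree (S*bool) -> Prop) (sd : tree (S*bool) * nat) :=
  fun c => Ck c /\ basic_clopen (upto sd.2) sd.1 c.

Fixpoint st (S : finType) (w0 : tree (S*bool)) (C : nat -> tree (S*bool) -> Prop)
  (x : nat -> tree S) (k n : nat) : tree (S*bool) * nat :=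
  match n with
  | 0 => let w := wit w0 (C k) (x 0) in (w, dep w 0)
  | n'.+1 => if k <= n' then
       let sd := st w0 C x k n' in
       let w := wit w0 (refine (C k) sd) (x n) in (w, dep w sd.2.+1)
     else let w := wit w0 (C k) (x n) in (w, dep w n)
  end.

Definition bset (S : finType) w0 C x k n : tree (S*bool) -> Prop :=
  refine (C k) (@st S w0 C x k n).

Definition Vset (S : finType) w0 C x n : tree S -> Prop :=
  fun t => forall k, k <= n -> proj0_img (@bset S w0 C x k n) t.

Lemma st_spec (S : finType) w0 C x n :
  proj0_img (C n) (x n) -> (0 < n -> @Vset S w0 C x n.-1 (x n)) ->
  forall k, k <= n -> bset w0 C x k n (st w0 C x k n).1 /\
     (forall u, ((st w0 C x k n).1 u).1 = x n u) /\
     (forall n', n = n'.+1 -> k <= n' -> bset w0 C x k n' (st w0 C x k n).1).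
Proof.
move=> HC HV k Hk; rewrite /bset /refine.
have self : forall w d, basic_clopen (upto d) w w by [].
case: n HC HV Hk => [|n'] HC HV Hk /=.
  have -> : k = 0 by lia.
  have [h1 h2] := wit_spec w0 HC; do !split => //.
case: ifP => hk /=.
  have [[h1 h1'] h2] := wit_spec w0 (HV isT k hk); split; [|split] => //.
  by move=> m [<-].
have -> : k = n'.+1 by lia.
have [h1 h2] := wit_spec w0 HC; split; [|split] => //.
by move=> m [Hm]; lia.
Qed.

Lemma st_succ (S : finType) w0 C x k n : k <= n ->
  (@st S w0 C x k n.+1).2 = dep (st w0 C x k n.+1).1 (st w0 C x k n).2.+1.
Proof. by move=> hk /=; rewrite hk. Qed.

Lemma st_base (S : finType) w0 C x k :
  (@st S w0 C x k k).2 = dep (st w0 C x k k).1 k.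
Proof. by case: k => [|k] //=; rewrite ltnn. Qed.

Lemma branch_size b : is_branch b -> forall i, size (b i) = i.
Proof.
move=> [H0 HS]; elim => [|i IH]; first by rewrite H0.
by have [d ->] := HS i; rewrite size_rcons IH.
Qed.

Lemma branch_take b : is_branch b -> forall i j, i <= j -> take i (b j) = b i.
Proof.
move=> Hb i; have Hs := branch_size Hb.
elim => [|j IH] Hij.
  have -> : i = 0 by lia. by case: Hb => ->.
case: (ltnP j i) => h.
  have -> : i = j.+1 by lia. by rewrite -{1}(Hs j.+1) take_size.
have [d ->] := (proj2 Hb) j.
by rewrite -cats1 takel_cat ?Hs // IH.
Qed.


Lemma limit_k (S : finType) w0 C x
  (HA : forall n, proj0_img (C n) (x n))
  (HV : forall n, @Vset S w0 C x n (x n.+1))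
  (HT : forall k c, C k c -> T_inf (fun u => (c u).2))
  (HF : forall k, exists F, cantor_closed F /\
          forall c, C k c <-> F c /\ T_inf (fun u => (c u).2)) k :
  let w n := (st w0 C x k n).1 in let d n := (st w0 C x k n).2 in
  let l := fun u => w (maxn k (size u)) u in
  [/\ C k l, (forall n u, k <= n -> size u <= d n -> l u = w n u),
      (forall n u, k <= n -> (w n u).1 = x n u) &
      (forall n, k <= n -> n <= d n)].
Proof.
move=> w d l.
have Hs n : k <= n -> [/\ bset w0 C x k n (w n),
     (forall u, (w n u).1 = x n u) &
     (forall n', n = n'.+1 -> k <= n' -> bset w0 C x k n' (w n))].
  move=> hk; have HV' : 0 < n -> Vset w0 C x n.-1 (x n).
    by case: n hk => [|n] //= _ _; exact: HV.
  by have [h1 [h2 h3]] := st_spec (HA n) HV' hk.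
have HC n : k <= n -> C k (w n) by move=> hk; have [[]] := Hs n hk.
have Hproj n u : k <= n -> (w n u).1 = x n u by move=> hk; have [_ h _] := Hs n hk.
have Hstep n : k <= n -> basic_clopen (upto (d n)) (w n) (w n.+1).
  move=> hk; have [_ _ h] := Hs n.+1 (leqW hk); by case: (h n erefl hk).
have Hmono n : k <= n -> d n < d n.+1.
  by move=> hk; rewrite /d st_succ //; exact: dep_ge.
have Hd n : k <= n -> n <= d n.
  elim: n => [|n IH] hk; first by [].
  case: (leqP k n) => h.
    by have := Hmono n h; have := IH h; lia.
  rewrite /d; have -> : k = n.+1 by lia. rewrite st_base; exact: dep_ge.
have Hdm j n : k <= n -> d n <= d (n + j).
  move=> hk; elim: j => [|j IH]; first by rewrite addn0.
  rewrite addnS; have := Hmono (n + j) (leq_trans hk (leq_addr _ _)); lia.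
have Hagree j n u : k <= n -> size u <= d n -> w (n + j) u = w n u.
  move=> hk hu; elim: j => [|j IH]; first by rewrite addn0.
  rewrite addnS -IH; apply: Hstep; first exact: (leq_trans hk (leq_addr _ _)).
  rewrite mem_upto; exact: (leq_trans hu (Hdm j n hk)).
have Hlim n u : k <= n -> size u <= d n -> l u = w n u.
  move=> hk hu; rewrite /l.
  set M := maxn k (size u); set m := maxn M n.
  have hM : k <= M by exact: leq_maxl.
  have huM : size u <= d M by have := Hd M hM; rewrite /M; lia.
  have e1 := Hagree (m - M) M u hM huM.
  have e2 := Hagree (m - n) n u hk hu.
  rewrite subnKC in e1; last exact: leq_maxl.
  rewrite subnKC in e2; last exact: leq_maxr.
  by rewrite -e1 e2.
split => //.
have [F [HFc HFe]] := HF k; apply/HFe; split.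
  apply: NNPP => hF; have [n0 Hn0] := HFc l hF.
  set n := maxn k n0.
  apply: (Hn0 (w n)); last by case/HFe: (HC n (leq_maxl _ _)).
  move=> u hu; symmetry; apply: Hlim; first exact: leq_maxl.
  have := Hd n (leq_maxl _ _); rewrite /n; lia.
move=> b Hb N0.
set n1 := maxn k N0.
have hk1 : k <= n1 by exact: leq_maxl.
have G : goodK (fun u => (w n1.+1 u).2) (d n1).+1 (d n1.+1).
  rewrite /d /w st_succ //; apply: dep_good; apply: (HT k); apply: HC; exact: leqW.
have [i [Hi Hwi]] := G (b (d n1.+1)) (branch_size Hb _).
rewrite (branch_take Hb) in Hwi; last by lia.
exists i; split.
  by have := Hd n1 hk1; have : N0 <= n1 := leq_maxr _ _; lia.
rewrite /= (Hlim n1.+1) //; first exact: leqW.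
by rewrite (branch_size Hb); lia.
Qed.

Lemma limit_all (S : finType) w0 C x
  (HA : forall n, proj0_img (C n) (x n))
  (HV : forall n, @Vset S w0 C x n (x n.+1))
  (HT : forall k c, C k c -> T_inf (fun u => (c u).2))
  (HF : forall k, exists F, cantor_closed F /\
          forall c, C k c <-> F c /\ T_inf (fun u => (c u).2)) :
  exists y, forall n, Vset w0 C x n y.
Proof.
pose l k := fun u => (st w0 C x k (maxn k (size u))).1 u.
have [_ H0l H0p H0d] := limit_k HA HV HT HF 0.
have Hx0 n u : size u <= n -> x n u = (l 0 u).1.
  move=> hu; rewrite -H0p // -H0l //.
  exact: (leq_trans hu (H0d n isT)).
exists (fun u => (l 0 u).1) => n k hk.
have [HCk Hlk Hpk _] := limit_k HA HV HT HF k.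
exists (l k); split.
  split => // u; rewrite mem_upto => hu; exact: Hlk.
move=> u; rewrite /l Hpk; last exact: leq_maxl.
apply: Hx0; exact: leq_maxr.
Qed.

Lemma st_ext (S : finType) w0 C C' x x' n :
  (forall j, j <= n -> C j = C' j) -> (forall j, j <= n -> x j = x' j) ->
  forall k, k <= n -> @st S w0 C x k n = st w0 C' x' k n.
Proof.
elim: n => [|n IH] HC Hx k hk /=; first by rewrite HC // Hx.
have HC' : forall j, j <= n -> C j = C' j by move=> j hj; apply: HC; lia.
have Hx' : forall j, j <= n -> x j = x' j by move=> j hj; apply: Hx; lia.
by case: ifP => h; rewrite ?(IH HC' Hx' k h) HC // Hx.
Qed.

Lemma Vset_ext (S : finType) w0 C C' x x' n :
  (forall j, j <= n -> C j = C' j) -> (forall j, j <= n -> x j = x' j) ->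
  @Vset S w0 C x n = Vset w0 C' x' n.
Proof.
move=> HC Hx; apply: predext => t; rewrite /Vset /bset.
split => H k hk; [rewrite -HC // -(st_ext w0 HC Hx hk) | rewrite HC // (st_ext w0 HC Hx hk)];
  exact: H.
Qed.

Lemma tau_fin (X : Type) (T : (X -> Prop) -> Prop) (HT : is_topology T)
  (A : nat -> X -> Prop) n :
  (forall k, k <= n -> T (A k)) -> T (fun t => forall k, k <= n -> A k t).
Proof.
case: HT => _ _ _ HI.
elim: n => [|n IH] H.
  have -> : (fun t => forall k, k <= 0 -> A k t) = A 0.
    apply: predext => t; split; first by apply.
    by move=> h k hk; have -> : k = 0 by lia.
  exact: H.
have -> : (fun t => forall k, k <= n.+1 -> A k t) =
          (fun t => (forall k, k <= n -> A k t) /\ A n.+1 t).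
  apply: predext => t; split; first by move=> h; split => [k hk|]; apply: h; lia.
  by move=> [h1 h2] k hk; case: (leqP k n) => h; [exact: h1|have -> : k = n.+1 by lia].
apply: HI; last exact: H.
by apply: IH => k hk; apply: H; lia.
Qed.

Definition Lsel (S : finType) (BS : (tree S -> Prop) -> Prop) (x : tree S) (U : tree S -> Prop)
  : tree S -> Prop :=
  epsilon (inhabits (fun _ => True)) (fun L => BS L /\ L x /\ Defs.subsetP L U).

Definition P4prop (S : finType) (B2 : (tree (S*bool) -> Prop) -> Prop)
  (L : tree S -> Prop) (C : tree (S*bool) -> Prop) : Prop :=
  [/\ B2 C, (forall c, C c -> T_inf (fun u => (c u).2)),
      (exists F : tree (S * bool) -> Prop, cantor_closed F /\
                 forall c, C c <-> (F c /\ T_inf (fun u => (c u).2))) &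
      (forall t, L t <-> proj0_img C t)].

Definition Csel (S : finType) B2 (L : tree S -> Prop) : tree (S*bool) -> Prop :=
  epsilon (inhabits (fun _ => True)) (P4prop B2 L).

Theorem theorem4p1
  (tau : forall S : finType, (tree S -> Prop) -> Prop)
  (B : forall S : finType, (tree S -> Prop) -> Prop)
  (Htop : forall S : finType, (1 < #|S|)%N -> is_topology (tau S))
  (Hbasis : forall S : finType, (1 < #|S|)%N -> is_basis (tau S) (B S))
  (P1 : forall (S : finType), (1 < #|S|)%N ->
        forall (D : seq node) (s : node -> S),
        prefix_closed D -> B S (basic_clopen D s))
  (P2 : forall (S : finType), (1 < #|S|)%N ->
        forall L M, B S L -> B S M ->
        B S (fun t => L t \/ M t) /\ B S (fun t => L t /\ M t))
  (P3 : forall (S G : finType), (1 < #|S|)%N -> (1 < #|G|)%N ->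
        forall L : tree (S * G) -> Prop, B ((S * G)%type : finType) L ->
        B S (proj0_img L))
  (P4 : forall (S : finType), (1 < #|S|)%N ->
        forall L, B S L ->
        exists C : tree (S * bool) -> Prop,
          [/\ B ((S * bool)%type : finType) C,
              (forall c, C c -> T_inf (fun u => (c u).2)),
              (exists F : tree (S * bool) -> Prop, cantor_closed F /\
                 forall c, C c <-> (F c /\ T_inf (fun u => (c u).2))) &
              (forall t, L t <-> proj0_img C t)]) :
  forall S : finType, (1 < #|S|)%N -> strong_choquet (tau S).
Proof.
move=> S HS.
have /card_gt0P [s0 _] : 0 < #|S| by lia.
split; first by exists (fun _ => s0).
have HS2 : 1 < #|((S * bool)%type : finType)| by rewrite card_prod card_bool; lia.
have Hb2 : 1 < #|{: bool}| by rewrite card_bool.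
pose w0 : tree (S * bool) := fun _ => (s0, false).
pose B2 := B ((S * bool)%type : finType).
pose dflt : tree S * (tree S -> Prop) := (fun _ => s0, fun _ => True).
pose Cf (p : nat -> tree S * (tree S -> Prop)) k := Csel B2 (Lsel (B S) (p k).1 (p k).2).
pose xf (p : nat -> tree S * (tree S -> Prop)) i := (p i).1.
pose sg : strategy (tree S) := fun h =>
  Vset w0 (Cf (fun i => nth dflt h i)) (xf (fun i => nth dflt h i)) (size h).-1.
have Vof p n : V_of sg p n = Vset w0 (Cf p) (xf p) n.
  rewrite /V_of /sg size_mkseq /=; apply: Vset_ext => j hj;
    by rewrite /Cf /xf nth_mkseq.
have Lspec x U : tau S U -> U x -> let L := Lsel (B S) x U in
    B S L /\ L x /\ Defs.subsetP L U.
  move=> hU hx; have [b [h1 h2 h3]] := (proj2 (Hbasis S HS)) U x hU hx.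
  exact: (epsilon_spec (inhabits (fun _ => True))
     (fun L => B S L /\ L x /\ Defs.subsetP L U) (ex_intro _ b (conj h1 (conj h2 h3)))).
have Cspec L : B S L -> P4prop B2 L (Csel B2 L).
  move=> hL; have [C HC] := P4 S HS L hL.
  exact: (epsilon_spec (inhabits (fun _ => True)) (P4prop B2 L) (ex_intro _ C HC)).
have Legal p i : tau S (p i).2 -> (p i).2 (p i).1 ->
    [/\ P4prop B2 (Lsel (B S) (p i).1 (p i).2) (Cf p i),
        proj0_img (Cf p i) (xf p i) &
        forall t, proj0_img (Cf p i) t -> (p i).2 t].
  move=> hU hx; have [hB [hLx hLU]] := Lspec _ _ hU hx.
  have HC := Cspec _ hB; split => //.
    by case: HC => _ _ _ <-.
  by move=> t ht; apply: hLU; case: HC => _ _ _ ->.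
have HBb p n k : k <= n -> tau S (p k).2 -> (p k).2 (p k).1 ->
    B S (proj0_img (bset w0 (Cf p) (xf p) k n)).
  move=> hk hU hx; have [[HB2 _ _ _] _ _] := Legal p k hU hx.
  apply: (P3 S bool HS Hb2); rewrite /bset /refine.
  apply: (proj2 (P2 _ HS2 _ _ HB2 _)).
  apply: (P1 _ HS2); exact: upto_pc.
exists sg; split.
  move=> p n Hl; rewrite Vof.
  have [hUn hxn _] := Hl n (leqnn n).
  have [_ HAn HLn] := Legal p n hUn hxn.
  have HVn : 0 < n -> Vset w0 (Cf p) (xf p) n.-1 (xf p n).
    move=> hn; have [_ _ h] := Hl n (leqnn n); rewrite -Vof; exact: h.
  split.
  - apply: tau_fin; first exact: Htop.
    move=> k hk; apply: (proj1 (Hbasis S HS)); apply: (HBb p n k hk);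
      by have [] := Hl k hk.
  - move=> k hk; have [h1 [h2 _]] := st_spec HAn HVn hk.
    by exists (st w0 (Cf p) (xf p) k n).1.
  - move=> t ht; apply: HLn; have [c [[hc _] hct]] := ht n (leqnn n).
    by exists c.
move=> p Hall.
have Hl i : tau S (p i).2 /\ (p i).2 (p i).1 by have [] := Hall i i (leqnn i).
have [y Hy] : exists y, forall n, Vset w0 (Cf p) (xf p) n y.
  apply: limit_all.
  - by move=> n; have [hU hx] := Hl n; have [] := Legal p n hU hx.
  - move=> n; have [_ _ h] := Hall n.+1 n.+1 (leqnn _).
    rewrite -Vof; apply: h => //; by have [] := Hl n.+1.
  - by move=> k c; have [hU hx] := Hl k; have [[_ h _ _] _ _] := Legal p k hU hx; apply: h.
  - by move=> k; have [hU hx] := Hl k; have [[_ _ h _] _ _] := Legal p k hU hx.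
by exists y => n; rewrite Vof.
Qed.
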